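(* In the setting of the context, suppose that $\rho:=\rho_{\mathcal A_\nu,\mathcal S_{\log},\pi_{\log}}$ is proper, convex, and lower semicontinuous with respect to $\tau_{\log}$. Then for all $X\in\mathcal C$, $$\eta_{\mathfrak R}(X)=\sup_{\varphi\in\mathcal D_{\ge1}}\exp\Big(\varphi(X)-\sup_{Y\in\mathcal B_{\tilde\rho}}\varphi(Y)-\sup_{Z\in\mathcal S}\big(\varphi(Z)-\log\pi(Z)\big)\Big),$$ where $\mathcal D_{\ge1}$ is the set of all log-linear $\tau$-continuous $\varphi\colon\mathcal C\to\mathbb R$ such that $\varphi(X)\ge0$ for all $X\in\mathcal C\cap\mathcal K$ with $X\ge1$ a.s.
   Context: Probability space $(\Omega,\mathcal F,P)$; $L^0_{++}$ = a.s. strictly positive random variables; $L^\infty_{++}=L^\infty\cap L^0_{++}$; $\frac{\mathcal A}{\mathcal D}=\{AD^{-1}\}$. Setting: nonempty $\mathcal C,\mathcal S,\mathcal K\subset L^0_{++}$ with $\frac{\mathcal C}{\mathcal S}\subset\mathcal K$, $\mathcal K$ a cone, $(\mathcal C,\cdot)$ a group, and (so that all expressions are defined) $\mathcal K\subset\mathcal C$ and $\mathcal S\subset\mathcal C$; pricing map $\pi\colon\mathcal S\to(0,\infty)$. $\mathcal C_{\log},\mathcal S_{\log},\mathcal K_{\log}$ are the images under $\log$. $\mathcal C_{\log}$ is equipped with a topology $\tau_{\log}$ making it a locally convex topological vector space; $\mathcal C$ carries $\tau=\{\exp(U):U\in\tau_{\log}\}$, so $\exp$ is a homeomorphism. A map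 $\varphi\colon\mathcal C\to\mathbb R$ is log-linear if $\varphi(X^\alpha Y^\beta)=\alpha\varphi(X)+\beta\varphi(Y)$ for $X,Y\in\mathcal C$, $\alpha,\beta\in\mathbb R$; equivalently the log-linear $\tau$-continuous maps are exactly $\psi\circ\log$ with $\psi$ in the topological dual of $\mathcal C_{\log}$. A return risk measure (RRM), with $L^\infty_{++}\subset\mathcal K$, is a positively homogeneous nondecreasing $\tilde\rho\colon\mathcal K\to(0,\infty)$ with $\tilde\rho(1)=1$; $\mathcal B_{\tilde\rho}=\{K\in\mathcal K:\tilde\rho(K)\le1\}$; $\mathfrak R=(\mathcal B_{\tilde\rho},\mathcal S,\pi)$; MARRM $\eta_{\mathfrak R}(X)=\inf\{\pi(Z):Z\in\mathcal S,\ X/Z\in\mathcal B_{\tilde\rho}\}$. Further $\nu=\log\circ\tilde\rho\circ\exp$, $\mathcal A_\nu=\{Y\in\mathcal K_{\log}:\nu(Y)\le0\}$, $\pi_{\log}=\log\circ\pi\circ\exp$ on $\mathcal S_{\log}$, and $\rho_{\mathcal A_\nu,\mathcal S_{\log},\pi_{\log}}(X_{\log})=\inf\{\pi_{\log}(L):L\in\mathcal S_{\log},\ X_{\log}-L\in\mathcal A_\nu\}$ on $\mathcal C_{\log}$. Proper means: never $-\infty$ and finite at some point. Conventions $\exp(-\infty)=0$, $\exp(\infty)=\infty$. *)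

(* Defs.v *)
From HB Require Import structures.
From mathcomp Require Import all_boot all_order all_algebra.
From mathcomp Require Import all_classical all_reals all_analysis.
Set Implicit Arguments. Unset Strict Implicit. Unset Printing Implicit Defensive.
Import Order.TTheory GRing.Theory Num.Theory.
Import numFieldNormedType.Exports.
Local Open Scope classical_set_scope.
Local Open Scope ring_scope.

(* Encoding: the log-space C_log (a vector subspace of L^0,
   with the locally convex topology tau_log) is represented by a tvsType V
   together with a map iota : V -> (Omega -> R) which is linear and injective
   up to P-a.s. equality and takes values in measurable functions.  An
   element v : V stands for the random variable X = exp (iota v) in C.
   Products/powers X^a Y^b in C correspond to a *: v + b *: w in V, and
   the topology tau = exp(tau_log) corresponds to the topology of V. *)

Section defs.
Context {d : measure_display} {Omega : measurableType d} {R : realType}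
  (P : probability Omega R) (V : tvsType R) (iota : V -> Omega -> R).

Definition as_ (Q : Omega -> Prop) : Prop := {ae P, forall w, Q w}.

Definition log_embedding : Prop :=
  [/\ (forall v, measurable_fun setT (iota v)),
      (forall (a b : R) (v w : V),
          as_ (fun t => iota (a *: v + b *: w) t = a * iota v t + b * iota w t)) &
      (forall v w : V, as_ (fun t => iota v t = iota w t) -> v = w)].

Variables (S K : set V) (pi rhot : V -> R).

(* K is a cone: lambda X in K for X in K, lambda > 0 *)
Definition is_cone_K : Prop := forall v (lam : R), K v -> 0 < lam ->
  exists u, K u /\ as_ (fun t => iota u t = iota v t + ln lam).

Definition CS_sub_K : Prop := forall v s, S s -> K (v - s).

Definition Linfpp_sub_K : Prop := forall Y : Omega -> R,
  measurable_fun setT Y -> as_ (fun t => 0 < Y t) ->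
  (exists M : R, as_ (fun t => Y t <= M)) ->
  exists v, K v /\ as_ (fun t => iota v t = ln (Y t)).

Definition pricing : Prop := forall z, S z -> 0 < pi z.

Definition RRM : Prop :=
  [/\ (forall v, K v -> 0 < rhot v),
      (forall v u (lam : R), K v -> K u -> 0 < lam ->
         as_ (fun t => iota u t = iota v t + ln lam) -> rhot u = lam * rhot v),
      (forall v w, K v -> K w -> as_ (fun t => expR (iota v t) <= expR (iota w t)) ->
         rhot v <= rhot w) &
      (forall u, K u -> as_ (fun t => expR (iota u t) = 1) -> rhot u = 1)].

Definition B_rhot : set V := [set v | K v /\ rhot v <= 1].

Definition eta_R (v : V) : \bar R :=
  ereal_inf [set (pi z)%:E | z in [set z | S z /\ B_rhot (v - z)]].

Definition nu (u : V) : R := ln (rhot u).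
Definition A_nu : set V := [set u | K u /\ nu u <= 0].
Definition pi_log (l : V) : R := ln (pi l).
Definition rho_log (x : V) : \bar R :=
  ereal_inf [set (pi_log l)%:E | l in [set l | S l /\ A_nu (x - l)]].

Definition D_ge1 : set (V -> R) := [set phi |
  [/\ (forall (a b : R) (v w : V), phi (a *: v + b *: w) = a * phi v + b * phi w),
      continuous phi &
      (forall v, K v -> as_ (fun t => 1 <= expR (iota v t)) -> 0 <= phi v)]].

End defs.

Section fun_props.
Context {R : realType} (V : tvsType R).
Local Open Scope ereal_scope.

Definition proper_fun (f : V -> \bar R) : Prop :=
  (forall x, f x != -oo) /\ (exists x, f x \is a fin_num).

Definition convex_efun (f : V -> \bar R) : Prop :=
  forall (x y : V) (l : R), (0 < l < 1)%R ->
    f (l *: x + (1 - l) *: y)%R <= l%:E * f x + (1 - l)%:E * f y.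
End fun_props.

(* Main.v *)
Require Import Defs.
From HB Require Import structures.
From mathcomp Require Import all_boot all_order all_algebra.
From mathcomp Require Import all_classical all_reals all_analysis.
From mathcomp Require Import ring lra.
Set Implicit Arguments. Unset Strict Implicit. Unset Printing Implicit Defensive.
Import Order.TTheory GRing.Theory Num.Theory.
Import numFieldNormedType.Exports.
Local Open Scope classical_set_scope.
Local Open Scope ring_scope.

Section HahnBanach.
Context {R : realType} {E : lmodType R} (p : E -> R).
Hypothesis p_add : forall x y, p (x + y) <= p x + p y.
Hypothesis p_scale : forall (t : R) x, 0 < t -> p (t *: x) = t * p x.

Lemma hb_p0 : p 0 = 0.
Proof. have := p_scale 0 (ltr0Sn _ 1); rewrite scaler0 => h; lra. Qed.

Lemma hb_pN x (t : R) : t * p x <= p (t *: x).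
Proof.
have [t0|t0|->] := ltgtP t 0; last by rewrite mul0r scale0r hb_p0.
- have := p_add (t *: x) ((- t) *: x); rewrite -scalerDl subrr scale0r hb_p0.
  have -> : p ((- t) *: x) = - t * p x by apply: p_scale; rewrite oppr_gt0.
  lra.
- by rewrite p_scale.
Qed.

Definition glin (G : set (E * R)) := forall (a b : R) x y, G x -> G y ->
  G (a *: x.1 + b *: y.1, a * x.2 + b * y.2).
Definition gfun (G : set (E * R)) := forall x y, G x -> G y -> x.1 = y.1 -> x.2 = y.2.
Definition gdom (G : set (E * R)) := forall x, G x -> x.2 <= p x.1.

Variable x0 : E.
Definition good G := [/\ glin G, gfun G, gdom G & G (x0, p x0)].
Definition PP G := G = set0 \/ good G.

Lemma PP_chain : forall F : set (set (E * R)),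
   F `<=` PP -> total_on F subset -> PP (\bigcup_(X in F) X).
Proof.
move=> F FP Ft.
have [[X0 [FX0 [u X0u]]]|nX] := pselect (exists X, F X /\ X !=set0); last first.
  left; apply/seteqP; split=> // u [X FX Xu]; apply: nX; exists X; split=> //.
  by exists u.
have goodn X : F X -> X !=set0 -> good X.
  by move=> FX [v Xv]; case: (FP X FX) => // X0e; rewrite X0e in Xv.
have two w1 w2 : (\bigcup_(X in F) X) w1 -> (\bigcup_(X in F) X) w2 ->
  exists Y, [/\ F Y, good Y, Y w1 & Y w2].
  move=> [Y1 F1 Y1u] [Y2 F2 Y2v].
  case: (Ft _ _ F1 F2) => h.
    by exists Y2; split=> //; [apply: goodn => //; exists w2|apply: h].
  by exists Y1; split=> //; [apply: goodn => //; exists w1|apply: h].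
right; split.
- move=> a b x y Ux Uy; have [Y [FY [gl _ _ _] Yx Yy]] := two _ _ Ux Uy.
  by exists Y => //; apply: gl.
- move=> x y Ux Uy; have [Y [_ [_ gf _ _] Yx Yy]] := two _ _ Ux Uy; exact: gf.
- move=> x [Y FY Yx]; have [_ _ gd _] := goodn Y FY (ex_intro _ x Yx); exact: gd.
- have [_ _ _ g0] := goodn X0 FX0 (ex_intro _ u X0u); by exists X0.
Qed.

Definition G0 := [set u : E * R | exists t : R, u = (t *: x0, t * p x0)].

Lemma good_G0 : good G0.
Proof.
split.
- move=> a b _ _ [t ->] [t' ->] /=; exists (a * t + b * t').
  by rewrite !scalerA scalerDl; congr pair; ring.
- move=> _ _ [t ->] [t' ->] /= e.
  have [->|x0n] := eqVneq x0 0; first by rewrite hb_p0 !mulr0.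
  have : (t - t') *: x0 == 0 by rewrite scalerBl e subrr.
  by rewrite scaler_eq0 (negbTE x0n) orbF subr_eq0 => /eqP ->.
- by move=> _ [t ->] /=; exact: hb_pN.
- by exists 1; rewrite scale1r mul1r.
Qed.

Lemma good_max : exists A, good A /\ forall B, A `<` B -> ~ good B.
Proof.
have [A [[A0|gA] mx]] := Zorn_bigcup PP_chain.
- exfalso; apply: (mx G0); last by right; exact: good_G0.
  rewrite A0; split=> // h.
  by apply: (h (x0, p x0)); exists 1; rewrite scale1r mul1r.
- by exists A; split=> // B AB gB; apply: (mx B AB); right.
Qed.

Lemma good_total A : good A -> (forall B, A `<` B -> ~ good B) ->
  forall x, exists r, A (x, r).
Proof.
move=> [gl gf gd g0] mx x1; apply: contrapT => nx.
have A00 : A (0, 0).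
  by have := gl 0 0 _ _ g0 g0; rewrite /= !scale0r !mul0r !addr0.
have Asc a y r : A (y, r) -> A (a *: y, a * r).
  by move=> h; have := gl a 0 _ _ h h; rewrite /= scale0r mul0r !addr0.
have Aadd y r y' r' : A (y, r) -> A (y', r') -> A (y + y', r + r').
  by move=> h h'; have := gl 1 1 _ _ h h'; rewrite /= !scale1r !mul1r.
pose L := [set yr.2 - p (yr.1 - x1) | yr in A].
have key yr yr' : A yr -> A yr' -> yr.2 - p (yr.1 - x1) <= p (yr'.1 + x1) - yr'.2.
  case: yr => y r; case: yr' => y' r' /= h h'.
  have := gd _ (Aadd _ _ _ _ h h'); rewrite /=.
  have := p_add (y - x1) (y' + x1).
  by rewrite addrCA subrK [y' + y]addrC; lra.
have hL : has_sup L.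
  split; first by exists (0 - p (0 - x1)); exists (0, 0).
  exists (p (0 + x1) - 0) => _ [yr Ayr <-]; exact: (key _ (0, 0)).
pose c := sup L.
have lowc y r : A (y, r) -> r - p (y - x1) <= c.
  by move=> h; apply: sup_upper_bound => //; exists (y, r).
have upc y r : A (y, r) -> c <= p (y + x1) - r.
  move=> h; apply: ge_sup; first by case: hL.
  by move=> _ [yr Ayr <-]; exact: (key _ (y, r)).
pose A' := [set u | exists y r t, A (y, r) /\ u = (y + t *: x1, r + t * c)].
have AA' : A `<=` A'.
  by move=> [y r] h; exists y, r, 0; rewrite scale0r mul0r !addr0.
apply: (mx A'); first split=> //.
  move=> h; apply: nx; exists c; apply: (h (x1, c)).
  by exists 0, 0, 1; rewrite scale1r mul1r !add0r.
split.
- move=> a b _ _ [y [r [t [h ->]]]] [y' [r' [t' [h' ->]]]] /=.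
  exists (a *: y + b *: y'), (a * r + b * r'), (a * t + b * t'); split.
    exact: (gl a b (y, r) (y', r')).
  congr pair; last by ring.
  rewrite !scalerDr !scalerA scalerDl -!addrA; congr (_ + _).
  by rewrite addrCA.
- move=> _ _ [y [r [t [h ->]]]] [y' [r' [t' [h' ->]]]] /= e.
  have [tt|tt] := eqVneq t t'.
    rewrite tt in e *; move/addIr: e => e.
    by have := gf (y, r) (y', r') h h' e; rewrite /= => ->.
  exfalso; apply: nx.
  have e2 : (t - t') *: x1 = y' - y.
    by rewrite scalerBl -(addrKA y (t *: x1)) [t *: x1 + y]addrC e [y + _]addrC addrKA.
  have tn : t - t' != 0 by rewrite subr_eq0.
  exists ((t - t')^-1 * r' + (- (t - t')^-1) * r).
  have -> : x1 = (t - t')^-1 *: y' + (- (t - t')^-1) *: y.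
    by rewrite scaleNr -scalerBr -e2 scalerA mulVf // scale1r.
  exact: (gl _ _ (y', r') (y, r)).
- move=> _ [y [r [t [h ->]]]] /=.
  have [t0|t0|->] := ltgtP t 0; last by rewrite scale0r mul0r !addr0; exact: (gd (y, r)).
  + have s0 : 0 < - t by rewrite oppr_gt0.
    have := lowc _ _ (Asc (- t)^-1 _ _ h).
    have -> : y + t *: x1 = (- t) *: ((- t)^-1 *: y - x1).
      by rewrite scalerBr scalerA mulfV ?gt_eqF // scale1r scaleNr opprK addrC.
    rewrite p_scale // => hc.
    have := ler_wpM2l (ltW s0) hc.
    rewrite mulrBr mulrA mulfV ?gt_eqF // mul1r; lra.
  + have := upc _ _ (Asc t^-1 _ _ h).
    have -> : y + t *: x1 = t *: (t^-1 *: y + x1).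
      by rewrite scalerDr scalerA mulfV ?gt_eqF // scale1r.
    rewrite p_scale // => hc.
    have := ler_wpM2l (ltW t0) hc.
    rewrite mulrBr mulrA mulfV ?gt_eqF // mul1r; lra.
- by exists x0, (p x0), 0; rewrite scale0r mul0r !addr0.
Qed.

Theorem hahn_banach : exists F : E -> R,
  [/\ (forall a b x y, F (a *: x + b *: y) = a * F x + b * F y),
      (forall x, F x <= p x) & F x0 = p x0].
Proof.
have [A [[gl gf gd g0] mx]] := good_max.
have tot := good_total (And4 gl gf gd g0) mx.
pose F x := projT1 (cid (tot x)).
have FA x : A (x, F x) by rewrite /F; case: cid.
exists F; split.
- move=> a b x y; apply: (gf (_, _) (_, _) (FA _) (gl a b _ _ (FA x) (FA y))) => //.
- by move=> x; exact: (gd _ (FA x)).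
- exact: (gf (_, _) (_, _) (FA x0) g0).
Qed.

End HahnBanach.

Section tvs_aux.
Context {R : realType} {E : tvsType R}.

Lemma scale_near (x : E) (s0 : R) (U : set E) : nbhs (s0 *: x) U ->
  exists2 e : R, 0 < e & forall s, `|s - s0| < e -> U (s *: x).
Proof.
move=> hU; have := @scale_continuous R E (s0, x) U hU.
case=> [[B1 B2]] /= [nB1 nB2] sub.
move/nbhs_ballP: nB1 => [e /= e0 he]; exists e => // s hs.
apply: (sub (s, x)); split => /=; last exact: nbhs_singleton.
apply: he; rewrite /ball /= distrC; exact: hs.
Qed.

Lemma open_nbhs' (A : set E) x : open A -> A x -> nbhs x A.
Proof. by rewrite openE => oA Ax; apply: oA. Qed.

End tvs_aux.

Section gauge.
Context {R : realType} {E : tvsType R} (B : set E).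
Hypothesis Bconv : forall x y (l : R), 0 <= l <= 1 -> B x -> B y ->
  B (l *: x + (1 - l) *: y).
Hypothesis B0 : nbhs (0 : E) B.
Hypothesis Bopen : forall x, B x -> nbhs x B.

Definition gT (x : E) := [set t : R | 0 < t /\ B (t^-1 *: x)].
Definition gauge x := inf (gT x).

Let B0' : B 0. Proof. exact: nbhs_singleton. Qed.

Lemma gT_ne x : gT x !=set0.
Proof.
have := @scale_near R E x 0 B; rewrite scale0r => /(_ B0) [e e0 he].
exists (2 / e); split; first by rewrite divr_gt0.
apply: he; rewrite subr0 invf_div ger0_norm ?divr_ge0 ?ltW //.
by rewrite ltr_pdivrMr // ltr_pMr // ltr1n.
Qed.

Lemma gT_lb x : lbound (gT x) 0.
Proof. by move=> t [t0 _]; apply: ltW. Qed.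

Lemma gT_up x t t' : gT x t -> t <= t' -> gT x t'.
Proof.
move=> [t0 Bt] tt'; have t'0 : 0 < t' by apply: lt_le_trans tt'.
split=> //.
have -> : t'^-1 *: x = (t / t') *: (t^-1 *: x) + (1 - t / t') *: 0.
  rewrite scaler0 addr0 scalerA; congr (_ *: _).
  by rewrite mulrC mulrA mulVf ?gt_eqF // mul1r.
apply: Bconv => //; rewrite divr_ge0 ?(ltW t0) ?(ltW t'0) //=.
by rewrite ler_pdivrMr // mul1r.
Qed.

Lemma gauge_ge0 x : 0 <= gauge x.
Proof. apply: lb_le_inf; [exact: gT_ne | exact: gT_lb]. Qed.

Lemma gauge_le x t : gT x t -> gauge x <= t.
Proof. by move=> h; apply: ge_inf => //; exists 0; exact: gT_lb. Qed.

Lemma gauge_lt x t : gauge x < t -> gT x t.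
Proof.
move=> /(inf_lt (gT_ne x)) [s hs st]; apply: gT_up hs _; exact: ltW.
Qed.

Lemma gauge_scale t x : 0 < t -> gauge (t *: x) = t * gauge x.
Proof.
move=> t0; apply/eqP; rewrite eq_le; apply/andP; split.
  apply/ler_addgt0Pr => e e0.
  have := gauge_lt (x := x) (t := gauge x + e / t).
  rewrite ltrDl divr_gt0 // => /(_ isT) [u0 Bu].
  have -> : t * gauge x + e = t * (gauge x + e / t).
    by rewrite mulrDr mulrCA mulfV ?gt_eqF // mulr1.
  apply: gauge_le; split; first by rewrite mulr_gt0.
  suff -> : (t * (gauge x + e / t))^-1 *: (t *: x) = (gauge x + e / t)^-1 *: x.
    by [].
  rewrite scalerA; congr (_ *: _); rewrite invfM mulrAC mulVf ?gt_eqF // mul1r.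
  by [].
apply: lb_le_inf; first exact: gT_ne.
move=> s [s0 Bs]; rewrite -ler_pdivlMl //.
apply: gauge_le; split; first by rewrite mulr_gt0 ?invr_gt0.
by rewrite invfM invrK scalerA mulrC in Bs *.
Qed.

Lemma gauge_add x y : gauge (x + y) <= gauge x + gauge y.
Proof.
apply/ler_addgt0Pr => e e0.
have e2 : 0 < e / 2 by rewrite divr_gt0.
have [t0 Bt] : gT x (gauge x + e / 2) by apply: gauge_lt; rewrite ltrDl.
have [s0 Bs] : gT y (gauge y + e / 2) by apply: gauge_lt; rewrite ltrDl.
set t := gauge x + e / 2 in t0 Bt; set s := gauge y + e / 2 in s0 Bs.
have -> : gauge x + gauge y + e = t + s.
  by rewrite /t /s; lra.
have ts0 : 0 < t + s by rewrite addr_gt0.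
apply: gauge_le; split => //.
have -> : (t + s)^-1 *: (x + y) =
    (t / (t + s)) *: (t^-1 *: x) + (1 - t / (t + s)) *: (s^-1 *: y).
  have -> : 1 - t / (t + s) = s / (t + s).
    by rewrite -[X in X - _](@divff _ (t + s)) ?gt_eqF // -mulrBl addrAC subrr add0r.
  rewrite !scalerA scalerDr; congr (_ *: _ + _ *: _).
    by rewrite mulrAC mulfV ?gt_eqF // mul1r.
  by rewrite mulrAC mulfV ?gt_eqF // mul1r.
apply: Bconv => //; rewrite divr_ge0 ?(ltW t0) ?(ltW ts0) //=.
by rewrite ler_pdivrMr // mul1r lerDl ltW.
Qed.

Lemma gauge_lt1 x : B x -> gauge x < 1.
Proof.
move=> Bx; have := @scale_near R E x 1 B; rewrite scale1r => /(_ (Bopen Bx)).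
move=> [e e0 he].
have e2 : 0 < e / 2 by rewrite divr_gt0.
have h1 : 1 < 1 + e / 2 by rewrite ltrDl.
apply: (le_lt_trans (y := (1 + e / 2)^-1)).
  apply: gauge_le; split; first by rewrite invr_gt0 (lt_trans ltr01).
  rewrite invrK; apply: he; rewrite addrAC subrr add0r ger0_norm ?ltW //.
  by rewrite ltr_pdivrMr // ltr_pMr // ltr1n.
by rewrite invf_lt1 // (lt_trans ltr01).
Qed.

Lemma gauge_B x : gauge x < 1 -> B x.
Proof. by move/gauge_lt => [_]; rewrite invr1 scale1r. Qed.

End gauge.


Section separation.
Context {R : realType} {E : tvsType R}.

Lemma sep_open (A : set E) :
  (forall x y (l : R), 0 <= l <= 1 -> A x -> A y -> A (l *: x + (1 - l) *: y)) ->
  open A -> A !=set0 -> ~ A 0 ->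
  exists F : E -> R, [/\ (forall a b x y, F (a *: x + b *: y) = a * F x + b * F y),
     continuous F & forall u, A u -> 0 < F u].
Proof.
move=> Aconv oA [w0 Aw0] nA0.
pose B := [set u | A (u + w0)].
have Bconv x y (l : R) : 0 <= l <= 1 -> B x -> B y -> B (l *: x + (1 - l) *: y).
  move=> hl Bx By; rewrite /B /=.
  have -> : l *: x + (1 - l) *: y + w0 = l *: (x + w0) + (1 - l) *: (y + w0).
    rewrite !scalerDr addrACA -scalerDl addrCA subrr addr0 scale1r.
    by rewrite addrAC.
  exact: Aconv.
have Bopen x : B x -> nbhs x B.
  move=> Bx; have := nbhsB (-w0) (open_nbhs' oA Bx).
  rewrite addrCA addNr addr0; apply: filterS => _ [a Aa <-].
  by rewrite /B /= addrAC addNr add0r.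
have B0 : nbhs 0 B by apply: Bopen; rewrite /B /= add0r.
pose p := gauge B.
have p_add x y : p (x + y) <= p x + p y by exact: gauge_add.
have p_scale (t : R) x : 0 < t -> p (t *: x) = t * p x by exact: gauge_scale.
have [G [Glin Gp Gw]] := hahn_banach p_add p_scale (-w0).
have GN v : G (- v) = - G v.
  by have := Glin (-1) 0 v v; rewrite scaleN1r scale0r addr0 mul0r addr0 mulN1r.
have GD u v : G (u + v) = G u + G v.
  by have := Glin 1 1 u v; rewrite !scale1r !mul1r.
have GZ (a : R) v : G (a *: v) = a * G v.
  by have := Glin a 0 v v; rewrite scale0r addr0 mul0r addr0.
have pw : 1 <= p (- w0).
  rewrite leNgt; apply/negP => /gauge_B h; apply: nA0.
  by have := h Bconv B0; rewrite /B /= addNr.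
exists (fun u => - G u); split.
- by move=> a b x y /=; rewrite Glin; ring.
- move=> x; apply/cvgrPdist_lt => e e0.
  have W0 : nbhs (0 : E) (B `&` (-%R @` B)) by apply: filterI => //; exact: nbhs0N.
  have := nbhsT x (nbhs0Z (lt0r_neq0 e0) W0).
  apply: filterS => _ [_ [w [Bw [b Bb bw]] <-] <-] /=.
  rewrite GD GZ (_ : - G x - - (G x + e * G w) = e * G w); last by ring.
  rewrite normrM gtr0_norm //.
  rewrite -[X in _ < X]mulr1 ltr_pM2l //.
  have h1 : G w < 1.
    apply: le_lt_trans (Gp w) _; exact: gauge_lt1.
  have h2 : G b < 1.
    apply: le_lt_trans (Gp b) _; exact: gauge_lt1.
  rewrite -bw GN in h1.
  by rewrite -bw GN normrN ltr_norml; apply/andP; split => //; rewrite ltrNl.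
- move=> u Au; have Bu : B (u - w0) by rewrite /B /= subrK.
  have hu : p (u - w0) < 1 by apply: gauge_lt1.
  have := Gp (u - w0); rewrite GD Gw.
  rewrite oppr_gt0; lra.
Qed.

End separation.

Definition convex01 {R : realType} {M : lmodType R} (A : set M) :=
  forall x y (l : R), 0 <= l <= 1 -> A x -> A y -> A (l *: x + (1 - l) *: y).

Lemma convex01_open {R : realType} {M : lmodType R} (A : set M) :
  (forall x y (l : R), 0 < l < 1 -> A x -> A y -> A (l *: x + (1 - l) *: y)) ->
  convex01 A.
Proof.
move=> h x y l /andP[l0 l1] Ax Ay.
have [->|ln0] := eqVneq l 0; first by rewrite scale0r add0r subr0 scale1r.
have [->|ln1] := eqVneq l 1; first by rewrite scale1r subrr scale0r addr0.
apply: h => //; rewrite lt_neqAle eq_sym ln0 l0 /= lt_neqAle ln1 l1 //.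
Qed.

Lemma lc_basis {R : realType} {E : tvsType R} (x : E) (N : set E) : nbhs x N ->
  exists U : set E, [/\ open U, U x, U `<=` N & convex01 U].
Proof.
move=> hN; have [Bs Bconv [Bo Bb]] := @locally_convex R E.
have := Bb x N hN; case=> U [BU Ux] UN.
exists U; split => //; first exact: Bo.
move=> y z l /andP[l0 l1] Uy Uz.
have := Bconv U (mem_set BU) y z (Itv01 l0 l1) (mem_set Uy) (mem_set Uz).
by rewrite inE.
Qed.

Definition linF {R : realType} {M : lmodType R} (F : M -> R) :=
  forall a b x y, F (a *: x + b *: y) = a * F x + b * F y.

Section linF_props.
Context {R : realType} {M : lmodType R} (F : M -> R) (hF : linF F).
Lemma linFD x y : F (x + y) = F x + F y.
Proof. by have := hF 1 1 x y; rewrite !scale1r !mul1r. Qed.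
Lemma linFZ a x : F (a *: x) = a * F x.
Proof. by have := hF a 0 x x; rewrite scale0r addr0 mul0r addr0. Qed.
Lemma linFN x : F (- x) = - F x.
Proof. by rewrite -scaleN1r linFZ mulN1r. Qed.
Lemma linFB x y : F (x - y) = F x - F y.
Proof. by rewrite linFD linFN. Qed.
End linF_props.

Lemma open_strict {R : realType} {Q : tvsType R} (F : Q -> R) (O : set Q) c w :
  linF F -> nbhs c O -> 0 < F w -> exists o, O o /\ F o < F c.
Proof.
move=> hF hO Fw.
have h1 := nbhsB (-c) hO; rewrite addNr in h1.
have := @scale_near R Q w 0 _; rewrite scale0r => /(_ _ h1) [e e0 he].
have e2 : 0 < e / 2 by rewrite divr_gt0.
have [|o Oo eo] := he (- (e / 2)).
  rewrite subr0 normrN gtr0_norm // ltr_pdivrMr // ltr_pMr // ltr1n //.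
exists o; split => //.
have -> : o = c + (- (e / 2)) *: w by rewrite -eo addNKr.
rewrite linFD // linFZ // mulNr; rewrite ltrBlDr ltrDl mulr_gt0 //.
Qed.

Section FM.
Context {R : realType} {E : tvsType R} (f : E -> \bar R).
Hypothesis fproper : proper_fun f.
Hypothesis fconv : convex_efun f.
Hypothesis flsc : lower_semicontinuous f.

Local Notation P := (E * R^o)%type.

Lemma pair_dec (z : P) : z = 1 *: (z.1, 0 : R^o) + z.2 *: ((0 : E), (1 : R^o)).
Proof.
case: z => y r /=.
rewrite /GRing.scale /= /GRing.add /=.
rewrite /add_pair /scale_pair /= scale1r !scaler0 addr0 add0r.
by rewrite /GRing.scale /= mulr1.
Qed.

Lemma fstD (z1 z2 : P) : (z1 + z2).1 = z1.1 + z2.1. Proof. by []. Qed.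
Lemma sndD (z1 z2 : P) : (z1 + z2).2 = z1.2 + z2.2. Proof. by []. Qed.
Lemma fstZ l (z : P) : (l *: z).1 = l *: z.1. Proof. by []. Qed.
Lemma sndZ l (z : P) : (l *: z).2 = l * z.2. Proof. by []. Qed.
Lemma fstN (z : P) : (- z).1 = - z.1. Proof. by []. Qed.
Lemma sndN (z : P) : (- z).2 = - z.2. Proof. by []. Qed.
Lemma fstB (z1 z2 : P) : (z1 - z2).1 = z1.1 - z2.1. Proof. by []. Qed.
Lemma sndB (z1 z2 : P) : (z1 - z2).2 = z1.2 - z2.2. Proof. by []. Qed.

Lemma sep_epi x0 a : (a%:E < f x0)%E -> exists phi : E -> R, exists beta s : R,
  [/\ linF phi, continuous phi, beta <= 0,
      (forall y r, (f y <= r%:E)%E -> phi y + beta * r <= s) & s < phi x0 + beta * a].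
Proof.
move=> af.
have [b ab bf] : exists2 b : R, a < b & (b%:E < f x0)%E.
  move: af; case: (f x0) => [r| |] //=.
  - rewrite !lte_fin => ar; exists ((a + r) / 2); rewrite ?lte_fin; lra.
  - by move=> _; exists (a + 1); [lra|rewrite ltry].
have [N hN Nb] := flsc bf.
have [U [oU Ux0 UN cU]] := lc_basis hN.
pose O : set P := [set z | U z.1 /\ a - 1 < z.2 < b].
pose epi : set P := [set z | (f z.1 <= (z.2 : R)%:E)%E].
pose D : set P := [set z | exists u e, [/\ O u, epi e & z = u - e]].
have Oopen z : O z -> nbhs z O.
  case: z => y r [/= Uy rab].
  exists (U, [set r : R^o | a - 1 < r < b]); first split.
  - exact: open_nbhs'.
  - have := @open_nbhs' R R^o `]a - 1, b[%classic r (itv_open _ _).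
    rewrite /= in_itv /= rab => /(_ isT); apply: filterS => t /=.
    by rewrite in_itv.
  - by move=> [y' r'] [/= Uy' r'ab]; split.
have Oconv x y (l : R) : 0 < l < 1 -> O x -> O y -> O (l *: x + (1 - l) *: y).
  move=> /andP[l0 l1] [Ux /andP[x1 x2]] [Uy /andP[y1 y2]]; split.
    by rewrite fstD !fstZ; apply: cU => //; rewrite ltW // ltW.
  rewrite sndD !sndZ; apply/andP; split; nra.
have epiconv x y (l : R) : 0 < l < 1 -> epi x -> epi y -> epi (l *: x + (1 - l) *: y).
  move=> /andP[l0 l1] ex ey; rewrite /epi /=.
  have -> : (l *: x.2 + (1 - l) *: y.2 : R^o) = (l * (x.2 : R) + (1 - l) * (y.2 : R) : R) by [].
  move: ex ey; rewrite /epi /= => ex ey.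
  apply: le_trans (fconv _ _ _) _; first by rewrite l0 l1.
  have l0' : (0 <= l%:E)%E by rewrite lee_fin ltW.
  have l1' : (0 <= (1 - l)%:E)%E by rewrite lee_fin subr_ge0 ltW.
  apply: le_trans (leeD (lee_wpmul2l l0' ex) (lee_wpmul2l l1' ey)) _.
  by rewrite -!EFinM -EFinD.
have Dconv : convex01 D.
  apply: convex01_open; move=> z1 z2 l hl [ua [ea [Oa Ea ->]]] [ub [eb [Ob Eb ->]]].
  exists (l *: ua + (1 - l) *: ub), (l *: ea + (1 - l) *: eb); split.
  - exact: Oconv.
  - exact: epiconv.
  - by rewrite !scalerBr opprD addrACA.
have Dopen : open D.
  rewrite openE; move=> z [u [e [Oo Ee ->]]].
  have := nbhsB (-e) (Oopen u Oo); rewrite [-e + u]addrC.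
  apply: filterS => _ [uu Oo' <-]; exists uu, e; split => //.
  by rewrite addrC.
have nD0 : ~ D 0.
  move=> [u [e [Oo Ee /esym/eqP]]]; rewrite subr_eq0 => /eqP oe.
  rewrite oe in Oo; case: Oo => Ue /andP[_ eb].
  have := Nb _ (UN _ Ue); move: Ee; rewrite /epi /= => h1 h2.
  have : (f e.1 < f e.1)%E.
    by apply: le_lt_trans h1 (lt_trans _ h2); rewrite lte_fin.
  by rewrite ltxx.
case: fproper => fnoo [x1 fx1].
pose e1 : P := (x1, fine (f x1)).
have epi1 : epi e1 by rewrite /epi /e1 /= fineK.
have O0 : O (x0, a) by split => //=; apply/andP; split; lra.
have D0 : D ((x0, a) - e1) by exists (x0, a), e1.
have [F [Flin Fcont Fpos]] := sep_open Dconv Dopen (ex_intro _ _ D0) nD0.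
pose phi y := F (y, 0 : R^o); pose beta := F (0, 1 : R^o).
have Fdec z : F z = phi z.1 + beta * z.2.
  by rewrite {1}(pair_dec z) Flin mul1r [_ * F _]mulrC.
have Foe u e : O u -> epi e -> F e < F u.
  move=> Oo Ee; have := Fpos (u - e) (ex_intro _ u (ex_intro _ e (And3 Oo Ee erefl))).
  by rewrite linFB // subr_gt0.
have [u1 [Oo1 Fo1]] := open_strict Flin (Oopen _ O0) (Fpos _ D0).
pose s := sup [set F e | e in epi].
have hs : has_sup [set F e | e in epi].
  split; first by exists (F e1), e1.
  by exists (F u1) => _ [e Ee <-]; apply: ltW; apply: Foe.
have sle : s <= F u1.
  apply: ge_sup; first by exists (F e1), e1.
  by move=> _ [e Ee <-]; apply: ltW; apply: Foe.
have Fs e : epi e -> F e <= s.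
  by move=> Ee; apply: sup_upper_bound => //; exists e.
exists phi, beta, s; split.
- move=> c d x y.
  have := Fdec (c *: (x, 0 : R^o) + d *: (y, 0 : R^o)).
  rewrite Flin fstD !fstZ sndD !sndZ /= !mulr0 addr0 mulr0 addr0.
  by move=> <-.
- move=> y; apply: (@continuous_comp _ _ _ (fun y : E => (y, 0 : R^o)) F y).
    exact: (cvg_pair (@cvg_id _ (nbhs y)) (cvg_cst (0 : R^o))).
  exact: Fcont.
- rewrite leNgt; apply/negP => bpos.
  have Fe1s : F e1 <= s by exact: Fs.
  pose t := (s - F e1) / beta + 1.
  have t0 : 0 <= t by rewrite addr_ge0 // divr_ge0 ?subr_ge0 // ltW.
  have : epi (x1, fine (f x1) + t).
    by rewrite /epi /= EFinD fineK //; apply: leeDl; rewrite lee_fin.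
  move=> /Fs; rewrite Fdec /= mulrDr addrA -(Fdec e1).
  rewrite /t mulrDr mulrCA mulfV ?gt_eqF // mulr1 mulr1; lra.
- by move=> y r fy; rewrite -(Fdec (y, r)); apply: Fs.
- by rewrite -(Fdec (x0, a)); apply: le_lt_trans sle Fo1.
Qed.

Let from_neg x0 a (phi : E -> R) beta s : linF phi -> continuous phi -> beta < 0 ->
  (forall y r, (f y <= r%:E)%E -> phi y + beta * r <= s) -> s < phi x0 + beta * a ->
  exists psi : E -> R, exists s' : R,
  [/\ linF psi, continuous psi, (forall y, ((psi y - s')%:E <= f y)%E) & a < psi x0 - s'].
Proof.
move=> hl hc b0 hmin hx0.
have nb : 0 < - beta by rewrite oppr_gt0.
exists (fun y => phi y / (- beta)), (s / (- beta)); split.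
- by move=> c d x y; rewrite hl mulrDl !mulrA.
- by move=> y; apply: cvgMr_tmp; exact: hc.
- move=> y; case: fproper => fnoo _.
  have := fnoo y; case E1 : (f y) => [r| |] //= _; last exact: leey.
  have := hmin y r; rewrite E1 lexx => /(_ isT) h.
  rewrite lee_fin -mulrBl ler_pdivrMr //; lra.
- by rewrite -mulrBl ltr_pdivlMr //; lra.
Qed.

Lemma affine_minorant x0 a : (a%:E < f x0)%E -> exists psi : E -> R, exists s : R,
  [/\ linF psi, continuous psi, (forall y, ((psi y - s)%:E <= f y)%E) & a < psi x0 - s].
Proof.
move=> af.
have [psi0 [s0 [l0 c0 m0 _]]] : exists psi : E -> R, exists s : R,
  [/\ linF psi, continuous psi, (forall y, ((psi y - s)%:E <= f y)%E) & True].
  case: fproper => fnoo [x1 fx1].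
  have h1 : ((fine (f x1) - 1)%:E < f x1)%E.
    by move: fx1; case: (f x1) => [r| |] //= _; rewrite lte_fin; lra.
  have [phi [beta [s [hl hc bn hmin hx]]]] := sep_epi h1.
  have hx1 := hmin x1 (fine (f x1)); rewrite fineK // lexx in hx1.
  have {}hx1 := hx1 isT.
  have bneg : beta < 0 by rewrite lt_neqAle bn andbT; apply/eqP => b0;
    rewrite b0 !mul0r in hx hx1; by have := lt_le_trans hx hx1; rewrite ltxx.
  have [psi [s' [? ? ? _]]] := from_neg hl hc bneg hmin hx.
  by exists psi, s'.
have [phi [beta [s [hl hc bn hmin hx]]]] := sep_epi af.
have [bneg|b0] := ltP beta 0; first exact: from_neg hl hc bneg hmin hx.
have {b0 bn} b0 : beta = 0 by apply/eqP; rewrite eq_le bn b0.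
rewrite b0 mul0r addr0 in hx.
have hd : 0 < phi x0 - s by rewrite subr_gt0.
pose lam := (`|a - (psi0 x0 - s0)| + 1) / (phi x0 - s).
have lam0 : 0 <= lam by rewrite divr_ge0 // ?ltW // addr_ge0.
exists (fun y => psi0 y + lam * phi y), (s0 + lam * s); split.
- by move=> c d x y; rewrite l0 hl; ring.
- move=> y; apply: cvgD; first exact: c0.
  by apply: cvgMl_tmp; exact: hc.
- move=> y; case: fproper => fnoo _.
  have := fnoo y; case E1 : (f y) => [r| |] //= _; last exact: leey.
  have := hmin y r; rewrite E1 lexx b0 mul0r addr0 => /(_ isT) h.
  have := m0 y; rewrite E1 lee_fin => h2.
  have : lam * (phi y - s) <= 0 by rewrite mulr_ge0_le0 // subr_le0.
  rewrite lee_fin; lra.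
- have e1 : lam * (phi x0 - s) = `|a - (psi0 x0 - s0)| + 1.
    by rewrite /lam divfK // gt_eqF.
  have := ler_norm (a - (psi0 x0 - s0)).
  rewrite mulrBr in e1; lra.
Qed.

End FM.

Lemma asS {d : measure_display} {Omega : measurableType d} {R : realType}
  (P : probability Omega R) (Q1 Q2 : Omega -> Prop) :
  (forall t, Q1 t -> Q2 t) -> as_ P Q1 -> as_ P Q2.
Proof. by move=> h; rewrite /as_; apply: filterS. Qed.

Lemma asS2 {d : measure_display} {Omega : measurableType d} {R : realType}
  (P : probability Omega R) (Q1 Q2 Q3 : Omega -> Prop) :
  (forall t, Q1 t -> Q2 t -> Q3 t) -> as_ P Q1 -> as_ P Q2 -> as_ P Q3.
Proof. by move=> h; rewrite /as_; apply: filterS2. Qed.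

Lemma ereal_dense {R : realType} (c : R) (x : \bar R) : (c%:E < x)%E ->
  exists2 c' : R, c < c' & (c'%:E < x)%E.
Proof.
case: x => [r| |] //=.
- rewrite lte_fin => cr; exists ((c + r) / 2); rewrite ?lte_fin; lra.
- by move=> _; exists (c + 1); [lra|rewrite ltry].
Qed.

Lemma fin_between {R : realType} (x : \bar R) (r1 r2 : R) :
  (r1%:E <= x)%E -> (x <= r2%:E)%E -> exists r : R, x = r%:E.
Proof. by case: x => [r| |] //= _ _; exists r. Qed.

Unset Implicit Arguments.
Theorem mainTheorem13 (d : measure_display) (Omega : measurableType d)
  (R : realType) (P : probability Omega R) (V : tvsType R)
  (iota : V -> Omega -> R) (S K : set V) (pi rhot : V -> R) :
  log_embedding P iota ->
  S !=set0 -> K !=set0 ->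
  is_cone_K P iota K -> CS_sub_K S K -> Linfpp_sub_K P iota K ->
  pricing S pi -> RRM P iota K rhot ->
  proper_fun (rho_log S K pi rhot) ->
  convex_efun (rho_log S K pi rhot) ->
  lower_semicontinuous (rho_log S K pi rhot) ->
  forall v : V,
    eta_R S K pi rhot v =
    ereal_sup [set expeR ((phi v)%:E
                 - ereal_sup [set (phi y)%:E | y in B_rhot K rhot]
                 - ereal_sup [set (phi z - ln (pi z))%:E | z in S])%E
              | phi in D_ge1 P iota K].
Proof.
move=> [imeas ilin iinj] [z0 Sz0] _ _ hCS _ hpr [rpos rhom rmono rone] hprop hconv hlsc v.
have Kall u : K u by have := hCS (u + z0) z0 Sz0; rewrite addrK.
have i0 : as_ P (fun t => iota 0 t = 0).
  have := ilin 0 0 z0 z0; rewrite !scale0r addr0; apply: asS => t ->.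
  by rewrite !mul0r addr0.
have r0 : rhot 0 = 1.
  apply: rone => //; apply: asS i0 => t ->; exact: expR0.
have B0 : B_rhot K rhot 0 by split => //; rewrite r0.
have AB u : A_nu K rhot u <-> B_rhot K rhot u.
  rewrite /A_nu /B_rhot /nu /=; split => -[_ h]; split => //.
    by rewrite -ler_ln ?posrE ?rpos // ln1.
  by rewrite -ln1 ler_ln ?posrE ?rpos.
have rhoE x z : S z -> B_rhot K rhot (x - z) ->
    (rho_log S K pi rhot x <= (ln (pi z))%:E)%E.
  by move=> Sz Bz; apply: ereal_inf_lbound; exists z => //; split => //; apply/AB.
have piE z : S z -> (pi z)%:E = expeR (ln (pi z))%:E.
  by move=> Sz; rewrite /= lnK // posrE hpr.
set sB := fun phi : V -> R => ereal_sup [set (phi y)%:E | y in B_rhot K rhot].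
set sS := fun phi : V -> R => ereal_sup [set (phi z - ln (pi z))%:E | z in S].
have weak (phi : V -> R) : linF phi ->
    (expeR ((phi v)%:E - sB phi - sS phi) <= eta_R S K pi rhot v)%E.
  move=> hl; apply: le_ereal_inf_tmp => _ [z [Sz Bz] <-].
  have h1 : ((phi (v - z))%:E <= sB phi)%E by apply: ereal_sup_ubound; exists (v - z).
  have h2 : ((phi z - ln (pi z))%:E <= sS phi)%E by apply: ereal_sup_ubound; exists z.
  rewrite piE // lee_expeR.
  apply: le_trans (leeB (leeB (lexx _) h1) h2) _.
  rewrite -!EFinB lee_fin linFB //; lra.
apply/eqP; rewrite eq_le; apply/andP; split; last first.
  by apply: ge_ereal_sup => _ [phi [hl _ _] <-]; apply: weak.
set M := ereal_sup _.
have zeroD : D_ge1 P iota K (fun _ => 0).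
  split => //.
  - by move=> *; rewrite !mulr0 addr0.
  - by move=> x; exact: cvg_cst.
have M0 : (0 <= M)%E.
  pose zf := fun _ : V => (0 : R)%R.
  have h : (expeR ((zf v)%:E - sB zf - sS zf) <= M)%E.
    by apply: ereal_sup_ubound; exists zf.
  exact: le_trans (expeR_ge0 _) h.
have core (c : R) : 0 < c -> (c%:E < eta_R S K pi rhot v)%E -> (c%:E <= M)%E.
  move=> c0 ceta.
  have [c' cc' c'eta] := ereal_dense ceta.
  have c'0 : 0 < c' by apply: lt_trans cc'.
  pose a := ln c.
  have arho : (a%:E < rho_log S K pi rhot v)%E.
    apply: (@lt_le_trans _ _ (ln c')%:E); first by rewrite lte_fin ltr_ln ?posrE.
    apply: le_ereal_inf_tmp => _ [l [Sl Al] <-]; rewrite lee_fin /pi_log.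
    rewrite ler_ln ?posrE ?hpr //.
    have : (eta_R S K pi rhot v <= (pi l)%:E)%E.
      by apply: ereal_inf_lbound; exists l => //; split => //; apply/AB.
    by move=> h; have := lt_le_trans c'eta h; rewrite lte_fin => /ltW.
  have [psi [s [pl pc pmin pv]]] := affine_minorant hprop hconv hlsc arho.
  have key b z : B_rhot K rhot b -> S z -> psi b + (psi z - ln (pi z)) <= s.
    move=> Bb Sz; have := pmin (z + b).
    have e : z + b - z = b by rewrite addrAC subrr add0r.
    have := rhoE (z + b) z Sz; rewrite e => /(_ Bb) h1 h2.
    have := le_trans h2 h1; rewrite lee_fin linFD //; lra.
  have psiD : D_ge1 P iota K psi.
    split => // v0 _ h1; rewrite leNgt; apply/negP => neg.
    have npos : 0 < - psi v0 by rewrite oppr_gt0.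
    pose t := (`|s - psi z0 + ln (pi z0)| + 1) / (- psi v0).
    have t0 : 0 <= t by rewrite divr_ge0 ?ltW // addr_ge0.
    pose w := (- t) *: v0 + 0 *: v0.
    have Bw : B_rhot K rhot w.
      split => //; rewrite -r0; apply: rmono => //.
      have h := @asS2 _ _ _ P _ _
        (fun t' => iota w t' = - t * iota v0 t' + 0 * iota v0 t' /\ iota 0 t' = 0)
        (fun t' a b => conj a b) (ilin (- t) 0 v0 v0) i0.
      apply: asS2 _ h h1 => t' [-> ->] hx.
      rewrite -expR0 ler_expR in hx.
      rewrite ler_expR mul0r addr0 mulNr oppr_le0 mulr_ge0 //.
    have := key w z0 Bw Sz0.
    rewrite /w (pl (- t) 0 v0 v0) mul0r addr0.
    have e1 : - t * psi v0 = `|s - psi z0 + ln (pi z0)| + 1.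
      by rewrite mulNr -mulrN /t divfK // gt_eqF.
    have := ler_norm (s - psi z0 + ln (pi z0)); rewrite e1; lra.
  have hM : (expeR ((psi v)%:E - sB psi - sS psi) <= M)%E.
    by apply: ereal_sup_ubound; exists psi.
  apply: le_trans hM.
  have sSub : (sS psi <= (s - psi 0)%:E)%E.
    by apply: ge_ereal_sup => _ [z Sz <-]; rewrite lee_fin; have := key 0 z B0 Sz; lra.
  have sSlb : ((psi z0 - ln (pi z0))%:E <= sS psi)%E.
    by apply: ereal_sup_ubound; exists z0.
  have [sig hsig] := fin_between sSlb sSub.
  have sBub : (sB psi <= (s - sig)%:E)%E.
    apply: ge_ereal_sup => _ [b Bb <-]; rewrite lee_fin.
    have : (sS psi <= (s - psi b)%:E)%E.
      by apply: ge_ereal_sup => _ [z Sz <-]; rewrite lee_fin; have := key b z Bb Sz; lra.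
    rewrite hsig lee_fin; lra.
  have sBlb : ((psi 0)%:E <= sB psi)%E by apply: ereal_sup_ubound; exists 0.
  have [sigB hsigB] := fin_between sBlb sBub.
  rewrite hsig hsigB -!EFinB /= lee_fin.
  rewrite -{1}(lnK (x := c)) ?posrE // ler_expR.
  move: sBub; rewrite hsigB lee_fin; rewrite /a in pv; lra.
rewrite leNgt; apply/negP => hlt.
move: core M0 hlt; case: M => [m| |] //=; last by move=> _ _; rewrite ltNge leey.
move=> core; rewrite lee_fin => m0 hlt.
have [c mc ceta] := ereal_dense hlt.
have := core c (le_lt_trans m0 mc) ceta; rewrite lee_fin; lra.
Qed.
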